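(* Consider the Markov jump linear system $x_{t+1}=A_{\theta_t}x_t+B_{\theta_t}u_t$, $y_t=C_{\theta_t}x_t$ with modes in $W=\{1,\dots,n_\theta\}$. Let $N\in\mathbb{N}_+$ and $\alpha,\omega\in\mathbb{N}$ with $\alpha+\omega<N$. If the system is $(N,\alpha,\omega)$-mode observable, then it is also $(N+1,\alpha,\omega)$-mode observable.
   Context: Here $A_i\in\mathbb{R}^{n_x\times n_x}$, $B_i\in\mathbb{R}^{n_x\times n_u}$, $C_i\in\mathbb{R}^{n_y\times n_x}$ for $i\in W$. For $\theta=(\theta_0,\dots,\theta_T)\in W^{T+1}$, $x\in\mathbb{R}^{n_x}$ and $u=(u_0,\dots,u_{T-1})\in\mathbb{R}^{Tn_u}$, let $Y(\theta,x,u)=(C_{\theta_0}x_0,\dots,C_{\theta_T}x_T)$ with $x_0=x$, $x_{k+1}=A_{\theta_k}x_k+B_{\theta_k}u_k$. Two paths $\theta,\theta'\in W^{T+1}$ are discernible with respect to a control sequence $u\in\mathbb{R}^{Tn_u}$ if $Y(\theta,x,u)\neq Y(\theta',x',u)$ for all $x,x'\in\mathbb{R}^{n_x}$. For $N\in\mathbb{N}_+$ and $\alpha,\omega\in\mathbb{N}$ with $\alpha+\omega<N$, the system is called $(N,\alpha,\omega)$-mode observable if for all paths $\theta,\theta'\in W^{N+1}$ with $(\theta_\alpha,\dots,\theta_{N-\omega})\neq(\theta'_\alpha,\dots,\theta'_{N-\omega})$, the paths $\theta$ and $\theta'$ are discernible with respect to almost every control sequence $u\in\mathbb{R}^{Nn_u}$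 (i.e., all $u$ outside a set of Lebesgue measure zero). *)

(* Defs.v *)
From HB Require Import structures.
From mathcomp Require Import all_boot all_order all_algebra.
From mathcomp Require Import reals.
Set Implicit Arguments. Unset Strict Implicit. Unset Printing Implicit Defensive.
Import Order.TTheory GRing.Theory Num.Theory.
Local Open Scope ring_scope.

Definition lebesgue_null (R : realType) (I : finType) (S : (I -> R) -> Prop) : Prop :=
  forall eps : R, 0 < eps ->
  exists a b : nat -> I -> R,
    (forall n i, a n i <= b n i) /\
    (forall m, \sum_(n < m) \prod_(i : I) (b n i - a n i) <= eps) /\
    (forall v, S v -> exists n, forall i, a n i <= v i <= b n i).

Section MJLS.
Variables (R : realType) (nth nx nu ny : nat).
Variables (A : 'I_nth -> 'M[R]_nx) (B : 'I_nth -> 'M[R]_(nx, nu))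
          (C : 'I_nth -> 'M[R]_(ny, nx)).

(* A control sequence u = (u_0,...,u_{T-1}) in R^{T n_u} is a real-valued
   function on 'I_T * 'I_nu; u_k is its k-th block as a column vector
   (0 outside the range, never used). *)
Definition ctrl (T : nat) (u : 'I_T * 'I_nu -> R) (k : nat) : 'cV[R]_nu :=
  \col_j (match insub k with Some i => u (i, j) | None => 0 end).

Fixpoint state (T : nat) (theta : 'I_T.+1 -> 'I_nth) (x : 'cV[R]_nx)
    (u : 'I_T * 'I_nu -> R) (k : nat) : 'cV[R]_nx :=
  match k with
  | 0 => x
  | k'.+1 => A (theta (inord k')) *m state theta x u k'
             + B (theta (inord k')) *m ctrl u k'
  end.

Definition output (T : nat) (theta : 'I_T.+1 -> 'I_nth) (x : 'cV[R]_nx)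
    (u : 'I_T * 'I_nu -> R) : 'I_T.+1 -> 'cV[R]_ny :=
  fun k => C (theta k) *m state theta x u k.

Definition discernible (T : nat) (theta theta' : 'I_T.+1 -> 'I_nth)
    (u : 'I_T * 'I_nu -> R) : Prop :=
  forall x x' : 'cV[R]_nx, output theta x u <> output theta' x' u.

Definition mode_observable (N alpha omega : nat) : Prop :=
  forall theta theta' : 'I_N.+1 -> 'I_nth,
    (exists k : 'I_N.+1, (alpha <= k <= N - omega)%N /\ theta k <> theta' k) ->
    @lebesgue_null R ('I_N * 'I_nu)%type
      (fun u => ~ discernible theta theta' u).

End MJLS.

(* Main.v *)
Require Import Defs.
From HB Require Import structures.
From mathcomp Require Import all_boot all_order all_algebra reals.
From mathcomp Require Import zify ring lra.
Set Implicit Arguments. Unset Strict Implicit. Unset Printing Implicit Defensive.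
Import Order.TTheory GRing.Theory Num.Theory.
Local Open Scope ring_scope.
From Stdlib Require Import ClassicalEpsilon FunctionalExtensionality.
Lemma sum_if_eq (R : realType) (M c : nat) (F : nat -> R) :
  \sum_(k < M) (if c == (k : nat) then F k else 0) = if (c < M)%N then F c else 0.
Proof.
elim: M => [|M IH]; first by rewrite big_ord0 ltn0.
rewrite big_ord_recr /= IH.
case: (ltngtP c M) => h.
- have h2 : (c < M.+1)%N = true by lia.
  by rewrite h2 addr0.
- have h2 : (c < M.+1)%N = false by lia.
  by rewrite h2 addr0.
- by rewrite h ltnSn add0r.
Qed.

Lemma geom_sum (R : realType) (eps : R) (P : nat) :
  \sum_(m < P) eps / 2 ^+ m.+1 = eps - eps / 2 ^+ P.
Proof.
elim: P => [|P IH]; first by rewrite big_ord0 expr0 divr1 subrr.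
rewrite big_ord_recr /= IH exprS.
have h : (2 : R) ^+ P != 0 by apply: expf_neq0; rewrite pnatr_eq0.
field. exact: h.
Qed.

Lemma pair_sum (R : realType) (vol : nat -> nat -> R) (eps : R) :
  (forall m n, 0 <= vol m n) ->
  (forall P, \sum_(m < P) \sum_(n < P) vol m n <= eps) ->
  forall M, \sum_(k < M) (match @pickle_inv (nat * nat)%type k with
                          | Some mn => vol mn.1 mn.2 | None => 0 end) <= eps.
Proof.
move=> v0 hP M.
pose F (k : 'I_M) := match @pickle_inv (nat * nat)%type k with
                     | Some mn => maxn mn.1 mn.2 | None => 0%N end.
set P := (\max_(k < M) F k).+1.
apply: le_trans (hP P).
have -> : \sum_(k < M) (match @pickle_inv (nat * nat)%type k with
                          | Some mn => vol mn.1 mn.2 | None => 0 end) =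
  \sum_(k < M) \sum_(m < P) \sum_(n < P)
      (if @pickle (nat * nat)%type (m : nat, n : nat) == (k : nat) then vol m n else 0).
  apply: eq_bigr => k _.
  have hk := @leq_bigmax _ F k.
  rewrite /F in hk.
  case E: (pickle_inv k) hk => [[m0 n0]|] /= hk.
    have pk : pickle (m0, n0) = (k : nat) by have := @pickle_invK (nat * nat)%type k; rewrite E.
    have eqv : forall m n, (pickle (m, n) == (k : nat)) = (m0 == m) && (n0 == n).
      move=> m n; rewrite -pk; apply/eqP/andP => [/(pcan_inj pickleK_inv) [-> ->]|[/eqP -> /eqP ->]] //.
    under eq_bigr => m _ do under eq_bigr => n _ do rewrite eqv.
    rewrite (eq_bigr (fun m : 'I_P => if m0 == (m : nat) then vol m0 n0 else 0)); last first.
      move=> m _; case: (m0 =P m) => [<-|ne] /=; last by rewrite big1.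
      rewrite (eq_bigr (fun n : 'I_P => if n0 == (n : nat) then vol m0 n else 0)) //.
      rewrite sum_if_eq ifT //. rewrite /P ltnS. apply: leq_trans hk. exact: leq_maxr.
    rewrite ((@sum_if_eq _ P m0 (fun _ => vol m0 n0))) ifT //. rewrite /P ltnS. apply: leq_trans hk. exact: leq_maxl.
  rewrite big1 // => m _; rewrite big1 // => n _.
  case: eqP => // hp. by move: E; rewrite -hp pickleK_inv.
rewrite exchange_big /=; apply: ler_sum => m _.
rewrite exchange_big /=; apply: ler_sum => n _.
rewrite (@sum_if_eq _ M _ (fun _ => vol m n)); case: ifP => // _; exact: v0.
Qed.
Lemma prod_pair (R : realType) (I J : finType) (F : I * J -> R) :
  \prod_p F p = \prod_i \prod_j F (i, j).
Proof. by rewrite pair_big; apply: eq_bigr => -[i j]. Qed.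

Lemma prod_split (R : realType) (N nu : nat) (i0 : 'I_N.+1) (F : 'I_N.+1 * 'I_nu -> R) :
  \prod_p F p = (\prod_j F (i0, j)) * \prod_(p : 'I_N * 'I_nu) F (lift i0 p.1, p.2).
Proof.
rewrite prod_pair (bigD1_ord i0) //= prod_pair. done.
Qed.

Lemma cyl (R : realType) (N nu : nat) (i0 : 'I_N.+1) (S : ('I_N * 'I_nu -> R) -> Prop) :
  @lebesgue_null R ('I_N * 'I_nu)%type S ->
  @lebesgue_null R ('I_N.+1 * 'I_nu)%type (fun v => S (fun p => v (lift i0 p.1, p.2))).
Proof.
move=> hS eps eps0.
case: (posnP nu) => [nu0|nupos].
  subst nu.
  have [a [b [hab [hsum hcov]]]] := hS eps eps0.
  exists (fun _ _ => 0), (fun _ _ => 0); split; first by move=> *; exact: lexx.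
  split.
    move=> m; apply: le_trans (hsum m); rewrite le_eqVlt; apply/orP; left; apply/eqP; apply: eq_bigr => n _.
    rewrite !prod_pair [LHS]big1 ?[RHS]big1 // => i _; by rewrite big_ord0.
  by move=> v /hcov [n _]; exists n => -[i [j hj]].
pose w (m : nat) : R := 2 * (m.+1)%:R.
have w0 m : 0 < w m by rewrite /w mulr_gt0 // ltr0n.
pose e (m : nat) := eps / (2 ^+ m.+1 * w m ^+ nu).
have e0 m : 0 < e m by rewrite /e divr_gt0 // mulr_gt0 // exprn_gt0.
have ex m : exists ab : (nat -> 'I_N * 'I_nu -> R) * (nat -> 'I_N * 'I_nu -> R),
  [/\ (forall n i, ab.1 n i <= ab.2 n i),
      (forall M, \sum_(n < M) \prod_i (ab.2 n i - ab.1 n i) <= e m) &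
      (forall v, S v -> exists n, forall i, ab.1 n i <= v i <= ab.2 n i)].
  by have [a [b [? [? ?]]]] := hS _ (e0 m); exists (a, b); split.
pose ab m := proj1_sig (constructive_indefinite_description _ (ex m)).
have hab m : [/\ (forall n i, (ab m).1 n i <= (ab m).2 n i),
      (forall M, \sum_(n < M) \prod_i ((ab m).2 n i - (ab m).1 n i) <= e m) &
      (forall v, S v -> exists n, forall i, (ab m).1 n i <= v i <= (ab m).2 n i)]
  := proj2_sig (constructive_indefinite_description _ (ex m)).
pose A' k (p : 'I_N.+1 * 'I_nu) := match @pickle_inv (nat * nat)%type k with
  | Some mn => match unlift i0 p.1 with
               | Some i' => (ab mn.1).1 mn.2 (i', p.2)
               | None => - (mn.1.+1)%:R end
  | None => 0 end.
pose B' k (p : 'I_N.+1 * 'I_nu) := match @pickle_inv (nat * nat)%type k with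
  | Some mn => match unlift i0 p.1 with
               | Some i' => (ab mn.1).2 mn.2 (i', p.2)
               | None => (mn.1.+1)%:R end
  | None => 0 end.
exists A', B'; split.
  move=> k [i j]; rewrite /A' /B'; case: pickle_inv => [[m n]|] //=.
  case: unliftP => [i'|] _ /=; first by case: (hab m) => h _ _; apply: h.
  have := ler0n R m.+1; lra.
pose vol m n := w m ^+ nu * \prod_p ((ab m).2 n p - (ab m).1 n p).
have vol0 m n : 0 <= vol m n.
  rewrite /vol; apply: mulr_ge0; first exact: exprn_ge0 (ltW (w0 m)).
  apply: prodr_ge0 => p _.
  by rewrite subr_ge0; case: (hab m) => h _ _; apply: h.
split.
  move=> M; apply: le_trans (pair_sum vol0 _ M).
    rewrite le_eqVlt; apply/orP; left; apply/eqP; apply: eq_bigr => k _.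
    rewrite /A' /B'; case E: pickle_inv => [[m n]|] /=.
      rewrite [LHS](prod_split i0) /= unlift_none /vol; congr (_ * _).
        rewrite prodr_const card_ord /w; congr (_ ^+ _); rewrite opprK; ring.
      by apply: eq_bigr => -[i j] _ /=; rewrite liftK.
    by rewrite (bigD1 (i0, Ordinal nupos)) //= subrr mul0r.
  move=> P; apply: (@le_trans _ _ (\sum_(m < P) eps / 2 ^+ m.+1)).
    apply: ler_sum => m _; rewrite /vol -mulr_sumr.
    case: (hab m) => _ hs _.
    apply: le_trans (ler_wpM2l (exprn_ge0 _ (ltW (w0 m))) (hs P)) _.
    rewrite /e le_eqVlt; apply/orP; left; apply/eqP; field.
    by rewrite !expf_neq0 // ?pnatr_eq0 // gt_eqF.
  rewrite geom_sum lerBlDr lerDl. by rewrite divr_ge0 ?exprn_ge0 // ltW.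
move=> v hv.
set x := \sum_j `|v (i0, j)|.
have x0 : 0 <= x by rewrite sumr_ge0.
set m := Num.Def.archi_bound x.
have hm := archi_boundP x0.
case: (hab m) => _ _ /(_ _ hv) [n hn].
exists (pickle (m, n)) => -[i j]; rewrite /A' /B' pickleK_inv /=.
case: unliftP => [i'|] -> /=; first exact: (hn (i', j)).
rewrite -ler_norml.
have hj : `|v (i0, j)| <= x by rewrite /x (bigD1 j) //= lerDl sumr_ge0.
apply: le_trans hj _; apply: le_trans (ltW hm) _; rewrite ler_nat; exact: leqnSn.
Qed.
Lemma val_lift_max N (i : 'I_N) : ((lift ord_max i : 'I_N.+1) : nat) = i.
Proof. by rewrite /= /bump leqNgt ltn_ord. Qed.

Lemma val_lift0 N (i : 'I_N) : ((lift ord0 i : 'I_N.+1) : nat) = i.+1.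
Proof. by []. Qed.

Lemma ctrl_prefix (R : realType) (nu N : nat) (u : 'I_N.+1 * 'I_nu -> R) k : (k < N)%N ->
  ctrl (fun p : 'I_N * 'I_nu => u (lift ord_max p.1, p.2)) k = ctrl u k.
Proof.
move=> hk; apply/matrixP => j c; rewrite !mxE.
case: insubP => [i _ vi|hn]; case: insubP => [i' _ vi'|hn'] //.
- congr (u (_, _)); apply: val_inj; rewrite /= /bump leqNgt ltn_ord /=.
  by move: vi vi' => /= -> ->.
- by exfalso; move/negP: hn'; apply; rewrite ltnS ltnW.
- by exfalso; move/negP: hn; apply.
Qed.

Lemma ctrl_shift (R : realType) (nu N : nat) (u : 'I_N.+1 * 'I_nu -> R) k :
  ctrl (fun p : 'I_N * 'I_nu => u (lift ord0 p.1, p.2)) k = ctrl u k.+1.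
Proof.
apply/matrixP => j c; rewrite !mxE.
case: insubP => [i _ vi|hn]; case: insubP => [i' _ vi'|hn'] //.
- by congr (u (_, _)); apply: val_inj; rewrite /= ?val_lift0 vi vi'.
- by exfalso; move/negP: hn'; apply; rewrite /= ltnS -vi ltn_ord.
- by exfalso; move/negP: hn; apply; rewrite -ltnS -vi' ltn_ord.
Qed.

Lemma state_S (R : realType) nth nx nu (A : 'I_nth -> 'M[R]_nx) (B : 'I_nth -> 'M[R]_(nx, nu))
  T (th : 'I_T.+1 -> 'I_nth) x u k :
  state A B th x u k.+1 = A (th (inord k)) *m state A B th x u k + B (th (inord k)) *m ctrl u k.
Proof. by []. Qed.

Lemma state_prefix (R : realType) nth nx nu (A : 'I_nth -> 'M[R]_nx) (B : 'I_nth -> 'M[R]_(nx, nu))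
  N (th : 'I_N.+2 -> 'I_nth) x (u : 'I_N.+1 * 'I_nu -> R) k : (k <= N)%N ->
  state A B (fun i : 'I_N.+1 => th (lift ord_max i)) x
    (fun p : 'I_N * 'I_nu => u (lift ord_max p.1, p.2)) k = state A B th x u k.
Proof.
elim: k => [|k IH] hk; first by [].
rewrite [LHS]state_S [RHS]state_S IH; last exact: ltnW.
rewrite ctrl_prefix; last exact: hk.
have -> : lift ord_max (inord k : 'I_N.+1) = inord k :> 'I_N.+2.
  by apply: val_inj; rewrite /= /bump !inordK; lia.
reflexivity.
Qed.



Lemma state_shift (R : realType) nth nx nu (A : 'I_nth -> 'M[R]_nx) (B : 'I_nth -> 'M[R]_(nx, nu))
  N (th : 'I_N.+2 -> 'I_nth) x x1 (u : 'I_N.+1 * 'I_nu -> R) k :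
  x1 = state A B th x u 1 -> (k <= N)%N ->
  state A B (fun i : 'I_N.+1 => th (lift ord0 i)) x1
    (fun p : 'I_N * 'I_nu => u (lift ord0 p.1, p.2)) k = state A B th x u k.+1.
Proof.
move=> ->; elim: k => [|k IH] hk; first reflexivity.
rewrite [LHS]state_S [RHS]state_S IH; last exact: ltnW.
rewrite ctrl_shift.
have -> : lift ord0 (inord k : 'I_N.+1) = inord k.+1 :> 'I_N.+2.
  by apply: val_inj; rewrite /= /bump !inordK; lia.
reflexivity.
Qed.

Theorem lemma3 (R : realType) (nth nx nu ny : nat)
    (A : 'I_nth -> 'M[R]_nx) (B : 'I_nth -> 'M[R]_(nx, nu))
    (C : 'I_nth -> 'M[R]_(ny, nx)) (N alpha omega : nat) :
  (0 < N)%N -> (alpha + omega < N)%N ->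
  mode_observable A B C N alpha omega ->
  mode_observable A B C N.+1 alpha omega.
Proof.
move=> N0 hNao hobs th th' [k [hk hne]].
have hsub : forall (S T : ('I_N.+1 * 'I_nu -> R) -> Prop),
    (forall u, T u -> S u) -> @lebesgue_null R _ S -> @lebesgue_null R _ T.
  move=> S T hTS hS eps e0; have [a [b [h1 [h2 h3]]]] := hS eps e0.
  by exists a, b; split=> //; split=> // v /hTS; exact: h3.
case: (leqP k (N - omega)) => hkN.
- pose tau := fun i : 'I_N.+1 => th (lift ord_max i).
  pose tau' := fun i : 'I_N.+1 => th' (lift ord_max i).
  have hl : lift ord_max (inord k : 'I_N.+1) = k.
    by apply: val_inj; rewrite /= /bump !inordK; lia.
  have hobs' := hobs tau tau'.
  have hd : exists kk : 'I_N.+1, (alpha <= kk <= N - omega)%N /\ tau kk <> tau' kk.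
    exists (inord k); rewrite /tau /tau' hl; split => //.
    rewrite inordK; lia.
  apply: hsub (cyl ord_max (hobs' hd)) => u hu /= hdis; apply: hu => x x' E.
  apply: (hdis x x'); apply: functional_extensionality => kk.
  have := congr1 (fun f => f (lift ord_max kk)) E.
  rewrite /output /tau /tau' val_lift_max.
  rewrite !state_prefix //; by rewrite -ltnS ltn_ord.
- have k0 : (0 < k)%N by lia.
  pose tau := fun i : 'I_N.+1 => th (lift ord0 i).
  pose tau' := fun i : 'I_N.+1 => th' (lift ord0 i).
  have hl : lift ord0 (inord k.-1 : 'I_N.+1) = k.
    by apply: val_inj; rewrite /= /bump !inordK; lia.
  have hobs' := hobs tau tau'.
  have hd : exists kk : 'I_N.+1, (alpha <= kk <= N - omega)%N /\ tau kk <> tau' kk.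
    exists (inord k.-1); rewrite /tau /tau' hl; split => //.
    rewrite inordK; lia.
  apply: hsub (cyl ord0 (hobs' hd)) => u hu /= hdis; apply: hu => x x' E.
  apply: (hdis (state A B th x u 1) (state A B th' x' u 1)).
  apply: functional_extensionality => kk.
  have := congr1 (fun f => f (lift ord0 kk)) E.
  rewrite /output /tau /tau' val_lift0.
  rewrite (state_shift (th:=th) (x:=x) (k:=kk) erefl); last by rewrite -ltnS ltn_ord.
  rewrite (state_shift (th:=th') (x:=x') (k:=kk) erefl); last by rewrite -ltnS ltn_ord.
  by [].
Qed.
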